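(* Let $\widetilde{\Sigma}=\widetilde{\Sigma}_1\uplus\cdots\uplus\widetilde{\Sigma}_n$ for pairwise disjoint visibly pushdown alphabets $\widetilde{\Sigma}_i$. If $\prec$ is a visibly pushdown contextual order on $\widetilde{\Sigma}$, then $\mathrm{red}_\prec(\widetilde{\Sigma}^* )$ is a visibly pushdown language.
   Context: A visibly pushdown (VP) alphabet is a finite alphabet partitioned into calls $\Sigma^{\mathsf{call}}$, returns $\Sigma^{\mathsf{ret}}$ and internals $\Sigma^{\mathsf{int}}$; $\widetilde{\Sigma}$ is the VP alphabet whose calls/returns/internals are the unions of those of the $\widetilde{\Sigma}_i$. A visibly pushdown automaton (VPA) $(Q,Q^{\mathsf{in}},\Gamma,\delta,Q^{\mathsf F})$ has a stack alphabet $\Gamma$ with bottom symbol $\bot$; on a call it moves to a new state and pushes a symbol of $\Gamma\setminus\{\bot\}$, on a return it pops the top symbol (reading $\bot$ when the stack is empty, which is not removed), on an internal it leaves the stack unchanged; it accepts when it ends in a state of $Q^{\mathsf F}$. A visibly pushdown language is one accepted by a VPA. The VPA is deterministic if it has one initial state and at most one transition per state/letter (and top-of-stack symbol for returns), and complete if it has at least one. Let $\mathbb{I}=\{(a,b):a\in\widetilde{\Sigma}_i,b\in\widetilde{\Sigma}_j,i\ne j\}$ and $\equiv_{\mathbb{I}}$ the least reflexive transitive relation on $\widetilde{\Sigma}^*$ with $uabv\equiv_{\mathbb{I}}ubav$ for $(a,b)\in\mathbb{I}$. A contextual order is a map $\prec$ from $\widetilde{\Sigma}^*$ to strict total orders on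 $\widetilde{\Sigma}$, $x\mapsto\prec_x$; it induces $\preceq$ on $\widetilde{\Sigma}^*$: $\sigma\preceq\rho$ iff $\sigma$ is a prefix of $\rho$ or $\sigma=\alpha a\beta$, $\rho=\alpha b\gamma$ with $a\prec_\alpha b$. For a language $L$, $\mathrm{red}_\prec(L)=\{w\in L:\forall u\in L,\ (u\equiv_{\mathbb{I}}w\wedge u\preceq w)\Rightarrow u=w\}$. A contextual order $\prec$ is visibly pushdown if there is a complete deterministic VPA $A$ over $\widetilde{\Sigma}$ and a map $\mathsf{ord}$ from states of $A$ to strict total orders on $\widetilde{\Sigma}$ such that for every $w\in\widetilde{\Sigma}^*$, $\prec_w=\mathsf{ord}(q)$ where $q$ is the state reached by $A$ after reading $w$. *)

(* Defs.v *)
From mathcomp Require Import all_boot.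
Set Implicit Arguments. Unset Strict Implicit. Unset Printing Implicit Defensive.

Inductive vpkind := Call | Ret | Int.

Section VP.
Variable Sigma : finType.
Variable kind : Sigma -> vpkind.

Record vpa := VPA {
  vstate : finType;
  vstack : finType;
  vbot : vstack;
  vinit : {set vstate};
  vfinal : {set vstate};
  (* call transition (q, a, q', gamma): move to q', push gamma (gamma <> bot) *)
  vcall : vstate -> Sigma -> vstate -> vstack -> bool;
  (* return transition (q, a, gamma, q'): pop gamma (gamma = bot on empty stack) *)
  vret  : vstate -> Sigma -> vstack -> vstate -> bool;
  vint  : vstate -> Sigma -> vstate -> bool
}.
Arguments vbot : clear implicits.
Arguments vinit : clear implicits.
Arguments vfinal : clear implicits.
Arguments vcall : clear implicits.
Arguments vret : clear implicits.
Arguments vint : clear implicits.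

Variable A : vpa.

(* Configurations: state and stack (top first, bottom symbol implicit). *)
Definition vconfig := (vstate A * seq (vstack A))%type.

Definition vstep (c : vconfig) (a : Sigma) (c' : vconfig) : Prop :=
  match kind a with
  | Call => exists g, g != vbot A /\ vcall A c.1 a c'.1 g /\ c'.2 = g :: c.2
  | Ret => (c.2 = [::] /\ vret A c.1 a (vbot A) c'.1 /\ c'.2 = [::])
           \/ (exists g s0, c.2 = g :: s0 /\ vret A c.1 a g c'.1 /\ c'.2 = s0)
  | Int => vint A c.1 a c'.1 /\ c'.2 = c.2
  end.

Fixpoint vreach (c : vconfig) (w : seq Sigma) (c' : vconfig) : Prop :=
  match w with
  | [::] => c = c'
  | a :: w' => exists c1, vstep c a c1 /\ vreach c1 w' c'
  end.

Definition vaccepts (w : seq Sigma) : Prop :=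
  exists q0 q s, q0 \in vinit A /\ vreach (q0, [::]) w (q, s) /\ q \in vfinal A.

Definition vdet_complete : Prop :=
  #|vinit A| = 1 /\
  (forall q a, kind a = Call ->
     exists! qg : vstate A * vstack A, qg.2 != vbot A /\ vcall A q a qg.1 qg.2) /\
  (forall q a g, kind a = Ret -> exists! q', vret A q a g q') /\
  (forall q a, kind a = Int -> exists! q', vint A q a q').

End VP.

Definition vp_language (Sigma : finType) (kind : Sigma -> vpkind)
  (L : seq Sigma -> Prop) : Prop :=
  exists A : vpa Sigma, forall w, L w <-> vaccepts kind A w.

Definition strict_total_order (T : eqType) (r : rel T) : Prop :=
  irreflexive r /\ transitive r /\ (forall x y, x != y -> r x y || r y x).

Definition contextual_order (Sigma : finType) (prec : seq Sigma -> rel Sigma) :=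
  forall x, strict_total_order (prec x).

Definition word_le (Sigma : finType) (prec : seq Sigma -> rel Sigma)
  (sigma rho : seq Sigma) : Prop :=
  prefix sigma rho \/
  exists alpha a beta b gamma,
    sigma = alpha ++ a :: beta /\ rho = alpha ++ b :: gamma /\ prec alpha a b.

Inductive trace_eq (Sigma : finType) (n : nat) (comp : Sigma -> 'I_n)
  : seq Sigma -> seq Sigma -> Prop :=
| te_refl w : trace_eq comp w w
| te_swap u a b v : comp a != comp b ->
    trace_eq comp (u ++ a :: b :: v) (u ++ b :: a :: v)
| te_trans w1 w2 w3 : trace_eq comp w1 w2 -> trace_eq comp w2 w3 ->
    trace_eq comp w1 w3.

Definition red (Sigma : finType) (n : nat) (comp : Sigma -> 'I_n)
  (prec : seq Sigma -> rel Sigma) (L : seq Sigma -> Prop) (w : seq Sigma) : Prop :=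
  L w /\ forall u, L u -> trace_eq comp u w -> word_le prec u w -> u = w.

Definition vp_contextual_order (Sigma : finType) (kind : Sigma -> vpkind)
  (prec : seq Sigma -> rel Sigma) : Prop :=
  exists (A : vpa Sigma) (ord : vstate A -> rel Sigma),
    vdet_complete kind A /\
    (forall q, strict_total_order (ord q)) /\
    forall w q0 q s, q0 \in vinit A -> vreach kind (q0, [::]) w (q, s) ->
      prec w = ord q.

(* Main.v *)
Require Import Defs.
From mathcomp Require Import all_boot.
Set Implicit Arguments. Unset Strict Implicit. Unset Printing Implicit Defensive.

Definition Dec (Sigma : finType) (n : nat) (comp : Sigma -> 'I_n)
  (prec : seq Sigma -> rel Sigma) (w : seq Sigma) (a : Sigma) : Prop :=
  exists alpha b v, w = alpha ++ b :: v /\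
    all (fun y => comp y != comp a) (b :: v) /\ prec alpha a b.

Definition haspat (Sigma : finType) (n : nat) (comp : Sigma -> 'I_n)
  (prec : seq Sigma -> rel Sigma) (w : seq Sigma) : Prop :=
  exists alpha b v a gamma, w = alpha ++ b :: v ++ a :: gamma /\
    all (fun y => comp y != comp a) (b :: v) /\ prec alpha a b.

Lemma trace_filter (Sigma : finType) (n : nat) (comp : Sigma -> 'I_n) u w :
  trace_eq comp u w -> forall i,
  filter (fun y => comp y == i) u = filter (fun y => comp y == i) w.
Proof.
elim=> //.
- move=> x a b v Hab i; rewrite !filter_cat /=.
  case: (eqVneq (comp a) i) => Ha; case: (eqVneq (comp b) i) => Hb //.
  by move: Hab; rewrite Ha Hb eqxx.
- by move=> w1 w2 w3 _ H1 _ H2 i; rewrite H1 H2.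
Qed.

Lemma trace_size (Sigma : finType) (n : nat) (comp : Sigma -> 'I_n) u w :
  trace_eq comp u w -> size u = size w.
Proof.
elim=> //.
- by move=> x a b v _; rewrite !size_cat.
- by move=> ? ? ? _ -> _ ->.
Qed.

Lemma trace_move (Sigma : finType) (n : nat) (comp : Sigma -> 'I_n) a s :
  all (fun y => comp y != comp a) s -> forall x y,
  trace_eq comp (x ++ a :: s ++ y) (x ++ s ++ a :: y).
Proof.
elim: s => [|c s IH] /= H x y; first exact: te_refl.
move/andP: H => [Hc Hs].
apply: te_trans; first apply: (@te_swap _ _ comp x a c (s ++ y)).
  by rewrite eq_sym.
have := IH Hs (rcons x c) y.
by rewrite !cat_rcons.
Qed.

Lemma filter_split (Sigma : eqType) (p : pred Sigma) s a r :
  filter p s = a :: r -> exists s1 s2, s = s1 ++ a :: s2 /\ all (predC p) s1.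
Proof.
elim: s => [|y s IH] //=.
case: ifP => Hy.
  by case=> -> _; exists [::], s.
move/IH => [s1 [s2 [-> H]]].
by exists (y :: s1), s2; rewrite /= Hy.
Qed.

Lemma red_char (Sigma : finType) (n : nat) (comp : Sigma -> 'I_n)
  (prec : seq Sigma -> rel Sigma) (Hc : contextual_order prec) w :
  red comp prec (fun _ => True) w <-> ~ haspat comp prec w.
Proof.
split.
- move=> [_ Hr] [alpha [b [v [a [gamma [Hw [Hall Hp]]]]]]].
  have Hab : comp b != comp a by case/andP: Hall.
  have E : alpha ++ a :: b :: v ++ gamma = alpha ++ b :: v ++ a :: gamma.
    rewrite -Hw; apply: Hr => //.
      rewrite Hw; exact: (trace_move Hall alpha gamma).
    right; exists alpha, a, (b :: v ++ gamma), b, (v ++ a :: gamma).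
    by rewrite Hw.
  have := congr1 (drop (size alpha)) E; rewrite !drop_size_cat //.
  by case=> Eab; rewrite Eab eqxx in Hab.
- move=> Hn; split=> // u _ Ht Hle.
  case: Hle => [Hp|[alpha [a [beta [b [gamma [Hu [Hw Hp]]]]]]]].
    have Hs := trace_size Ht.
    by move: Hp; rewrite prefixE Hs take_size => /eqP.
  exfalso; apply: Hn.
  have := trace_filter Ht (comp a).
  rewrite Hu Hw !filter_cat /= eqxx.
  move/(congr1 (drop (size (filter (fun y => comp y == comp a) alpha)))).
  rewrite !drop_size_cat // => /esym H.
  have [s1 [s2 [E Hall]]] := @filter_split _ (fun y => comp y == comp a) (b :: gamma) a _ H.
  case: s1 E Hall => [|b' v] E Hall.
    case: E => Eb _.
    have [Hirr _] := Hc alpha.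
    by rewrite Eb Hirr in Hp.
  case: E => Eb Eg.
  exists alpha, b, v, a, s2; split.
  by rewrite Eg.
  split=> //.
  rewrite Eb; move: Hall; apply: sub_all => y /=; done.
Qed.

Definition upd (Sigma : finType) (n : nat) (comp : Sigma -> 'I_n) (A : vpa Sigma)
  (ord : vstate A -> rel Sigma)
  (x : (vstate A * {set Sigma} * bool)%type) (c : Sigma) (q' : vstate A)
  : (vstate A * {set Sigma} * bool)%type :=
  (q', [set a | (comp a != comp c) && ((a \in x.1.2) || ord x.1.1 a c)],
   x.2 || (c \in x.1.2)).

Definition Bvpa (Sigma : finType) (n : nat) (comp : Sigma -> 'I_n) (A : vpa Sigma)
  (ord : vstate A -> rel Sigma) : vpa Sigma :=
  @VPA Sigma _ (vstack A) (vbot A)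
    [set x : (vstate A * {set Sigma} * bool)%type |
       (x.1.1 \in vinit A) && (x.1.2 == set0) && ~~ x.2]
    [set x : (vstate A * {set Sigma} * bool)%type | ~~ x.2]
    (fun x c x' g => @vcall _ A x.1.1 c x'.1.1 g && (x' == upd comp ord x c x'.1.1))
    (fun x c g x' => @vret _ A x.1.1 c g x'.1.1 && (x' == upd comp ord x c x'.1.1))
    (fun x c x' => @vint _ A x.1.1 c x'.1.1 && (x' == upd comp ord x c x'.1.1)).

Lemma stepB (Sigma : finType) (n : nat) (kind : Sigma -> vpkind) (comp : Sigma -> 'I_n)
  (A : vpa Sigma) (ord : vstate A -> rel Sigma) x s c x' s' :
  @vstep _ kind (Bvpa comp ord) (x, s) c (x', s') <->
  @vstep _ kind A (x.1.1, s) c (x'.1.1, s') /\ x' = upd comp ord x c x'.1.1.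
Proof.
rewrite /vstep /=; case: (kind c) => /=.
- split.
    by move=> [g [Hg [/andP [H /eqP E] Es]]]; split=> //; exists g.
  by move=> [[g [Hg [H Es]]] E]; exists g; rewrite H E eqxx.
- split.
    move=> [[Hs [/andP [H /eqP E] Es]]|[g [s0 [Hs [/andP [H /eqP E] Es]]]]].
      by split=> //; left.
    by split=> //; right; exists g, s0.
  move=> [[[Hs [H Es]]|[g [s0 [Hs [H Es]]]]] E].
    by left; rewrite H -E eqxx.
  by right; exists g, s0; rewrite H -E eqxx.
- split.
    by move=> [/andP [H /eqP E] Es].
  by move=> [[H Es] E]; rewrite H -E eqxx.
Qed.

Lemma reachB (Sigma : finType) (n : nat) (kind : Sigma -> vpkind) (comp : Sigma -> 'I_n)
  (A : vpa Sigma) (ord : vstate A -> rel Sigma) w : forall x s x' s',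
  @vreach _ kind (Bvpa comp ord) (x, s) w (x', s') ->
  @vreach _ kind A (x.1.1, s) w (x'.1.1, s').
Proof.
elim: w => [|c w IH] x s x' s' /=; first by case=> -> ->.
move=> [[x1 s1] [/stepB [H _] /IH R]].
by exists (x1.1.1, s1).
Qed.

Lemma liftA (Sigma : finType) (n : nat) (kind : Sigma -> vpkind) (comp : Sigma -> 'I_n)
  (A : vpa Sigma) (ord : vstate A -> rel Sigma) w : forall q s q' s',
  @vreach _ kind A (q, s) w (q', s') -> forall D f,
  exists x', x'.1.1 = q' /\ @vreach _ kind (Bvpa comp ord) ((q, D, f), s) w (x', s').
Proof.
elim: w => [|c w IH] q s q' s' /=.
  by case=> <- <- D f; exists (q, D, f).
move=> [[q1 s1] [Hs /IH H]] D f.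
set x1 := upd comp ord (q, D, f) c q1.
have [x' [E R]] := H x1.1.2 x1.2.
exists x'; split=> //.
exists (x1, s1); split=> //.
by apply/stepB.
Qed.

Lemma vreach_rcons (Sigma : finType) (kind : Sigma -> vpkind) (A0 : vpa Sigma)
  w : forall c a c',
  @vreach _ kind A0 c (rcons w a) c' <->
  exists c1, @vreach _ kind A0 c w c1 /\ @vstep _ kind A0 c1 a c'.
Proof.
elim: w => [|y w IH] c a c' /=.
  split; first by move=> [c1 [H1 <-]]; exists c.
  by move=> [c1 [<- H]]; exists c'.
split.
  by move=> [c1 [H1 /IH [c2 [H2 H3]]]]; exists c2; split=> //; exists c1.
move=> [c2 [[c1 [H1 H2]] H3]]; exists c1; split=> //.
by apply/IH; exists c2.
Qed.

Lemma runA (Sigma : finType) (kind : Sigma -> vpkind) (A0 : vpa Sigma) :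
  vdet_complete kind A0 -> forall w c, exists c', @vreach _ kind A0 c w c'.
Proof.
move=> [_ [Hcall [Hret Hint]]].
elim=> [|a w IH] c; first by exists c.
have [c1 Hs] : exists c1, @vstep _ kind A0 c a c1.
  rewrite /vstep; case Ek: (kind a).
  - have [[q' g] [[Hg Hc] _]] := Hcall c.1 a Ek.
    by exists (q', g :: c.2); exists g.
  - case Es: c.2 => [|g s0].
      have [q' [H _]] := Hret c.1 a (vbot A0) Ek.
      by exists (q', [::]); left.
    have [q' [H _]] := Hret c.1 a g Ek.
    by exists (q', s0); right; exists g, s0.
  - have [q' [H _]] := Hint c.1 a Ek.
    by exists (q', c.2).
have [c' H] := IH c1.
by exists c'; exists c1.
Qed.

Lemma Dec_nil (Sigma : finType) (n : nat) (comp : Sigma -> 'I_n)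
  (prec : seq Sigma -> rel Sigma) a : ~ Dec comp prec [::] a.
Proof. by move=> [[|? ?] [b [v [E _]]]]. Qed.

Lemma haspat_nil (Sigma : finType) (n : nat) (comp : Sigma -> 'I_n)
  (prec : seq Sigma -> rel Sigma) : ~ haspat comp prec [::].
Proof. by move=> [[|? ?] [b [v [a [g [E _]]]]]]. Qed.

Lemma Dec_rcons (Sigma : finType) (n : nat) (comp : Sigma -> 'I_n)
  (prec : seq Sigma -> rel Sigma) w c a :
  Dec comp prec (rcons w c) a <-> (comp a != comp c) /\ (Dec comp prec w a \/ prec w a c).
Proof.
split.
- move=> [alpha [b [v [E [Hall Hp]]]]].
  case/lastP: v E Hall => [|v z] E Hall.
    rewrite cats1 in E; case/rcons_inj: E => -> ->.
    split; last by right.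
    by case/andP: Hall; rewrite eq_sym.
  rewrite -rcons_cons -rcons_cat in E; case/rcons_inj: E => Ew Ez.
  rewrite Ez.
  move: Hall; rewrite -rcons_cons all_rcons => /andP [Hz Hall].
  split; first by rewrite eq_sym.
  by left; exists alpha, b, v.
- move=> [Hca [[alpha [b [v [E [Hall Hp]]]]]|Hp]].
    exists alpha, b, (rcons v c); split; first by rewrite E rcons_cat.
    by rewrite -rcons_cons all_rcons Hall eq_sym Hca.
  exists w, c, [::]; split; first by rewrite cats1.
  by rewrite /= eq_sym Hca.
Qed.

Lemma haspat_rcons (Sigma : finType) (n : nat) (comp : Sigma -> 'I_n)
  (prec : seq Sigma -> rel Sigma) w c :
  haspat comp prec (rcons w c) <-> haspat comp prec w \/ Dec comp prec w c.
Proof.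
split.
- move=> [alpha [b [v [a [g [E [Hall Hp]]]]]]].
  case/lastP: g E => [|g z] E.
    have E' : rcons w c = rcons (alpha ++ b :: v) a by rewrite E -cats1 -catA.
    case/rcons_inj: E' => Ew Ea.
    by right; exists alpha, b, v; rewrite Ea.
  rewrite -rcons_cons -rcons_cat -rcons_cons -rcons_cat in E.
  case/rcons_inj: E => Ew _.
  by left; exists alpha, b, v, a, g.
- move=> [[alpha [b [v [a [g [E H]]]]]]|[alpha [b [v [E H]]]]].
    exists alpha, b, v, a, (rcons g c); split=> //.
    by rewrite E rcons_cat rcons_cons rcons_cat rcons_cons.
  exists alpha, b, v, c, [::]; split=> //.
  by rewrite E -cats1 -!catA.
Qed.

Lemma invB (Sigma : finType) (n : nat) (kind : Sigma -> vpkind) (comp : Sigma -> 'I_n)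
  (prec : seq Sigma -> rel Sigma) (A : vpa Sigma) (ord : vstate A -> rel Sigma)
  (Hord : forall w q0 q s, q0 \in vinit A ->
     @vreach _ kind A (q0, [::]) w (q, s) -> prec w = ord q) w :
  forall x0 x s, x0 \in vinit (Bvpa comp ord) ->
  @vreach _ kind (Bvpa comp ord) (x0, [::]) w (x, s) ->
  (forall a, a \in x.1.2 <-> Dec comp prec w a) /\ (x.2 <-> haspat comp prec w).
Proof.
elim/last_ind: w => [|w c IH] x0 x s Hx0.
  move=> /= [<- _].
  move: Hx0; rewrite inE => /andP [/andP [_ /eqP ->] Hf].
  split.
    by move=> a; rewrite inE; split=> // /Dec_nil.
  split; first by rewrite (negbTE Hf).
  by move/haspat_nil.
move/vreach_rcons => [[x1 s1] [R /stepB [Hst E]]].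
have [IH1 IH2] := IH _ _ _ Hx0 R.
have Hx0A : x0.1.1 \in vinit A by move: Hx0; rewrite inE => /andP [/andP [] ].
have Hp : prec w = ord x1.1.1 := Hord _ _ _ _ Hx0A (reachB R).
rewrite E /=.
split.
  move=> a; rewrite inE; split.
    move/andP=> [Hca /orP [Ha|Ha]]; apply/Dec_rcons; split=> //; first by left; apply/IH1.
    by right; rewrite Hp.
  move/Dec_rcons=> [Hca [Ha|Ha]]; apply/andP; split=> //; apply/orP.
    by left; apply/IH1.
  by right; rewrite -Hp.
split.
  by move/orP=> [H|H]; apply/haspat_rcons; [left; apply/IH2 | right; apply/IH1].
by move/haspat_rcons=> [H|H]; apply/orP; [left; apply/IH2 | right; apply/IH1].
Qed.

Theorem proposition3p12 (Sigma : finType) (n : nat) (kind : Sigma -> vpkind)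
  (comp : Sigma -> 'I_n) (prec : seq Sigma -> rel Sigma) :
  contextual_order prec ->
  vp_contextual_order kind prec ->
  vp_language kind (red comp prec (fun _ => True)).
Proof.
move=> Hc [A [ord [Hdc [Hto Hord]]]].
exists (Bvpa comp ord) => w; split.
- move/(red_char comp Hc) => Hn.
  have /card_gt0P [q0 Hq0] : 0 < #|vinit A| by rewrite Hdc.1.
  have [[q s] R] := runA Hdc w (q0, [::]).
  have [x [Ex RB]] := liftA comp ord R set0 false.
  have Hx0 : (q0, set0, false) \in vinit (Bvpa comp ord).
    by rewrite inE /= Hq0 eqxx.
  have [_ H2] := invB Hord Hx0 RB.
  exists (q0, set0, false), x, s; split=> //; split=> //.
  by rewrite inE; apply/negP => /H2.
- move=> [x0 [x [s [Hx0 [R Hf]]]]].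
  apply/(red_char comp Hc) => Hp.
  have [_ H2] := invB Hord Hx0 R.
  move/H2: Hp => Hx.
  by rewrite inE Hx in Hf.
Qed.
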